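(* All points $\mathbf{p}_\sigma^{(\delta)}$, for $\sigma\in\{-1,1\}^d$ with $\sigma_{d-1}=\sigma_d=1$ and $\delta=1/L>0$ sufficiently small, are pairwise distinct, and so are all the points $\mathbf{q}_\sigma$.
   Context: Fix $\epsilon,\gamma$ with $0<4\gamma<\epsilon<\frac12$. The Goldfarb cube $\mathrm{Gol}_d\subseteq\mathbb{R}^d$ is the set of $\mathbf{x}$ with $-z_1\le x_1\le z_1:=1$, $-z_2\le x_2\le z_2:=1-\epsilon-\epsilon x_1$, $-z_k\le x_k\le z_k:=1-\epsilon+\epsilon\gamma-\epsilon(x_{k-1}-\gamma x_{k-2})$ ($3\le k\le d$); its vertices are $\mathbf{v}_\sigma$, $\sigma\in\{-1,1\}^d$ (the vertex where, for each $k$, the upper inequality is tight if $\sigma_k=1$ and the lower one if $\sigma_k=-1$), with $\mathrm{sign}(v_{\sigma,k})=\sigma_k$. The dual Goldfarb cube is $\mathrm{Gol}^{\triangle}_d=\bigcap_{\tau}\{\mathbf{x}:\mathbf{v}_\tau^T\mathbf{x}\le1\}$. Let $\mathcal{S}:=\{\mathbf{x}\in\mathbb{R}^d: x_1=\ldots=x_{d-2}=0\}$. For $\mathbf{x}$ and $L\ge0$, $\mathbf{x}(L):=(Lx_1,\ldots,Lx_{d-2},x_{d-1},x_d)$, $\mathcal{P}(L):=\{\mathbf{x}(L):\mathbf{x}\in\mathcal{P}\}$; with $\delta=1/L$, $\mathrm{Gol}^{\triangle}_d(L)=\bigcap_\tau\{\mathbf{x}:\mathbf{v}_\tau(\delta)^T\mathbf{x}\le1\}$.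 For each $\sigma$ there is $\mathbf{p}_\sigma\in\mathcal{S}\cap\mathrm{Gol}^{\triangle}_d$ with $\mathbf{p}_\sigma^T\mathbf{v}_\sigma=1$, $\mathbf{p}_\sigma^T\mathbf{v}_\tau<1$ ($\tau\ne\sigma$). Let $\mathcal{L}:=\{(0,\ldots,0,2,y)^T:y\in\mathbb{R}\}$. Define $\mathbf{q}_\sigma:=\mathbf{p}_\sigma-C\,\mathbf{v}_\sigma(0)/\|\mathbf{v}_\sigma(0)\|^2$ with $C<0$ chosen so that $q_{\sigma,d-1}=2$, and $\mathbf{p}_\sigma^{(\delta)}:=C\,\mathbf{v}_\sigma(\delta)/\|\mathbf{v}_\sigma(\delta)\|^2+\mathbf{q}_\sigma$ (projection of $\mathbf{q}_\sigma$ onto $\mathbf{v}_\sigma(\delta)^T\mathbf{x}=1$). Known result used: for $\sigma_{d-1}=\sigma_d=1$ and $\delta$ small, (i) $\mathbf{v}_\sigma(\delta)^T\mathbf{p}_\sigma^{(\delta)}=1$ and $\mathbf{v}_\tau(\delta)^T\mathbf{p}_\sigma^{(\delta)}<1$ for $\tau\ne\sigma$; (ii) $(\mathbf{p}_\sigma^{(\delta)},\mathbf{q}_\sigma)$ is the unique pair minimizing $\|\mathbf{x}-\mathbf{x}'\|$ over $\mathbf{x}\in\mathrm{Gol}^{\triangle}_d(L)$, $\mathbf{x}'\in\mathcal{L}$, $x'_d\ge q_{\sigma,d}$. *)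

(* Defs.v *)
(* Points of R^d are row vectors 'rV[R]_d; coordinates are
   0-based, so the paper's x_k is x 0 (k-1). Sign vectors sigma in {-1,1}^d
   are {ffun 'I_d -> bool} (true = +1, false = -1). *)
From HB Require Import structures.
From mathcomp Require Import all_boot all_order all_algebra.
From mathcomp Require Import reals.
Set Implicit Arguments. Unset Strict Implicit. Unset Printing Implicit Defensive.
Import Order.TTheory GRing.Theory Num.Theory.
Local Open Scope ring_scope.

Section Goldfarb.
Variables (R : realType) (d : nat) (eps gam : R).

Definition sgnb (b : bool) : R := if b then 1 else -1.

Definition sgn_at (sigma : {ffun 'I_d -> bool}) (k : nat) : R :=
  if insub k is Some i then sgnb (sigma i) else 1.

(* vpair s n = (x_n, x_{n+1}) (0-based) for the vertex where, for each k,
   x_k = s_k * z_k(x), i.e. the upper inequality is tight if s_k = 1 and the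
   lower one if s_k = -1:
     x_0 = s_0 * 1,  x_1 = s_1 (1 - eps - eps x_0),
     x_{k+2} = s_{k+2} (1 - eps + eps gam - eps (x_{k+1} - gam x_k)). *)
Fixpoint vpair (s : nat -> R) (n : nat) : R * R :=
  match n with
  | 0 => (s 0%N, s 1%N * (1 - eps - eps * s 0%N))
  | n'.+1 => let: (a, b) := vpair s n' in
             (b, s n'.+2 * (1 - eps + eps * gam - eps * (b - gam * a)))
  end.

Definition gvertex (sigma : {ffun 'I_d -> bool}) : 'rV[R]_d :=
  \row_(i < d) (vpair (sgn_at sigma) i).1.

Definition dotv (u v : 'rV[R]_d) : R := \sum_(i < d) u 0 i * v 0 i.
Definition norm2 (u : 'rV[R]_d) : R := dotv u u.

Definition scalev (L : R) (x : 'rV[R]_d) : 'rV[R]_d :=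
  \row_(i < d) (if (i < d - 2)%N then L * x 0 i else x 0 i).

Definition in_S (x : 'rV[R]_d) : Prop :=
  forall i : 'I_d, (i < d - 2)%N -> x 0 i = 0.

Definition in_dual_gol (x : 'rV[R]_d) : Prop :=
  forall tau, dotv (gvertex tau) x <= 1.

(* sigma_{d-1} = sigma_d = 1 (paper indexing; 0-based indices d-2, d-1) *)
Definition last_two_pos (sigma : {ffun 'I_d -> bool}) : bool :=
  [forall i : 'I_d, (d - 2 <= i)%N ==> sigma i].

Variable p : {ffun 'I_d -> bool} -> 'rV[R]_d.

Definition coord (x : 'rV[R]_d) (k : nat) : R :=
  if insub k is Some i then x 0 i else 0.

(* C_sigma: the (unique) constant with q_{sigma,d-1} = 2 (paper indexing,
   i.e. 0-based coordinate d-2), where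
   q_sigma = p_sigma - C v_sigma(0) / ||v_sigma(0)||^2. *)
Definition Cq (sigma : {ffun 'I_d -> bool}) : R :=
  let v0 := scalev 0 (gvertex sigma) in
  (coord (p sigma) (d - 2) - 2) * norm2 v0 / coord v0 (d - 2).

Definition qpt (sigma : {ffun 'I_d -> bool}) : 'rV[R]_d :=
  let v0 := scalev 0 (gvertex sigma) in
  p sigma - (Cq sigma / norm2 v0) *: v0.

Definition pdelta (delta : R) (sigma : {ffun 'I_d -> bool}) : 'rV[R]_d :=
  let vd := scalev delta (gvertex sigma) in
  (Cq sigma / norm2 vd) *: vd + qpt sigma.
End Goldfarb.

(* Main.v *)
Require Import Defs.
From HB Require Import structures.
From mathcomp Require Import all_boot all_order all_algebra.
From mathcomp Require Import reals.
From mathcomp Require Import ring lra zify.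
Import Order.TTheory GRing.Theory Num.Theory.
Local Open Scope ring_scope.

Lemma vpair_inv (R : realType) (eps gam : R) (s : nat -> R) :
  0 < 4 * gam -> 4 * gam < eps -> eps < 1 / 2 ->
  (forall k, s k = 1 \/ s k = -1) ->
  forall n, let ab := vpair eps gam s n in
    [/\ -1 <= ab.1 <= 1, -1 <= ab.2 <= 1, 0 < ab.1 * s n, 0 < ab.2 * s n.+1 &
        2 * gam * (1 + ab.2) <= eps * (1 - gam + ab.2 - gam * ab.1)].
Proof.
move=> g0 ge e2 hs; elim => [|n IH] /=.
  case: (hs 0%N) => ->; case: (hs 1%N) => ->; split; rewrite ?mul1r ?mulN1r ?mulr1 ?mulrN1 ?opprK; try (apply/andP; split); try nra.
  all: idtac.
case: (vpair eps gam s n) IH => a b /= [/andP[a1 a2] /andP[b1 b2] ha hb hj].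
have e0 : 0 < eps by lra.
have eb : eps * b <= eps by nra.
have ga : - gam <= gam * a by nra.
have ega : - (eps * gam) <= eps * (gam * a) by nra.
have z0 : 0 < 1 - eps + eps * gam - eps * (b - gam * a) by nra.
have jb : 0 <= 2 * gam * (1 + b) by nra.
have z1 : 1 - eps + eps * gam - eps * (b - gam * a) <= 1 by nra.
set z := 1 - eps + eps * gam - eps * (b - gam * a) in z0 z1 *.
have hz : z = 1 - eps * (1 - gam + b - gam * a) by rewrite /z; ring.
case: (hs n.+2) => ->; rewrite ?mul1r ?mulN1r ?mulr1 ?mulrN1 ?mulNr ?opprK.
  split => //; try (apply/andP; split); try nra.
split => //; try (apply/andP; split); try nra.
Qed.
Lemma dotvC {R : realType} {d : nat} (u : 'rV[R]_d) (v : 'rV[R]_d) : dotv u v = dotv v u.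
Proof. by apply: eq_bigr => i _; rewrite mulrC. Qed.
Lemma dotvDl {R : realType} {d : nat} (u : 'rV[R]_d) (v : 'rV[R]_d) (w : 'rV[R]_d) : dotv (u + v) w = dotv u w + dotv v w.
Proof. by rewrite /dotv -big_split; apply: eq_bigr => i _; rewrite mxE mulrDl. Qed.
Lemma dotvZl {R : realType} {d : nat} (k : R) (u : 'rV[R]_d) (v : 'rV[R]_d) : dotv (k *: u) v = k * dotv u v.
Proof. by rewrite /dotv mulr_sumr; apply: eq_bigr => i _; rewrite mxE mulrA. Qed.
Lemma dotvNl {R : realType} {d : nat} (u : 'rV[R]_d) (v : 'rV[R]_d) : dotv (- u) v = - dotv u v.
Proof. by rewrite -scaleN1r dotvZl mulN1r. Qed.
Lemma dotvBl {R : realType} {d : nat} (u : 'rV[R]_d) (v : 'rV[R]_d) (w : 'rV[R]_d) : dotv (u - v) w = dotv u w - dotv v w.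
Proof. by rewrite dotvDl dotvNl. Qed.
Lemma dotvDr {R : realType} {d : nat} (u : 'rV[R]_d) (v : 'rV[R]_d) (w : 'rV[R]_d) : dotv w (u + v) = dotv w u + dotv w v.
Proof. by rewrite !(dotvC w) dotvDl. Qed.
Lemma dotvZr {R : realType} {d : nat} (k : R) (u : 'rV[R]_d) (v : 'rV[R]_d) : dotv v (k *: u) = k * dotv v u.
Proof. by rewrite !(dotvC v) dotvZl. Qed.
Lemma dotvBr {R : realType} {d : nat} (u : 'rV[R]_d) (v : 'rV[R]_d) (w : 'rV[R]_d) : dotv w (u - v) = dotv w u - dotv w v.
Proof. by rewrite !(dotvC w) dotvBl. Qed.
Lemma norm2_ge0 {R : realType} {d : nat} (u : 'rV[R]_d) : 0 <= norm2 u.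
Proof. by apply: sumr_ge0 => i _; rewrite -expr2 sqr_ge0. Qed.

HB.lock Definition vperp {R : realType} {d : nat} (v : 'rV[R]_d) := scalev 1 v - scalev 0 v.
Lemma scalev1 {R : realType} {d : nat} (v : 'rV[R]_d) : scalev 1 v = v.
Proof. by apply/rowP => i; rewrite mxE; case: ifP => _ //; rewrite mul1r. Qed.
Lemma scalev_dec {R : realType} {d : nat} (L : R) (v : 'rV[R]_d) : scalev L v = scalev 0 v + L *: vperp v.
Proof.
rewrite vperp.unlock; apply/rowP => i; rewrite !mxE; case: ifP => _; rewrite ?mul1r ?mul0r; ring.
Qed.
Lemma dot0perp {R : realType} {d : nat} (u : 'rV[R]_d) (v : 'rV[R]_d) : dotv (scalev 0 u) (vperp v) = 0.
Proof.
rewrite vperp.unlock /dotv big1 // => i _; rewrite !mxE; case: ifP => _; rewrite ?mul0r //; ring.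
Qed.
Lemma dotS_perp {R : realType} {d : nat} (x : 'rV[R]_d) (v : 'rV[R]_d) : in_S x -> dotv x (vperp v) = 0.
Proof.
move=> hx; rewrite vperp.unlock /dotv big1 // => i _; rewrite !mxE; case: ifP => h.
  by rewrite hx // mul0r.
ring.
Qed.
Lemma dotS_v {R : realType} {d : nat} (x : 'rV[R]_d) (v : 'rV[R]_d) : in_S x -> dotv x v = dotv x (scalev 0 v).
Proof.
move=> hx; rewrite -{1}(scalev1 v) (scalev_dec 1) dotvDr dotvZr dotS_perp // mulr0 addr0 //.
Qed.
Lemma inS_scale0 {R : realType} {d : nat} (v : 'rV[R]_d) : in_S (scalev 0 v).
Proof. by move=> i hi; rewrite mxE hi mul0r. Qed.
Lemma inS_B {R : realType} {d : nat} (x y : 'rV[R]_d) : in_S x -> in_S y -> in_S (x - y).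
Proof. by move=> hx hy i hi; rewrite !mxE hx // hy // subr0. Qed.
Lemma inS_Z {R : realType} {d : nat} (k : R) (x : 'rV[R]_d) : in_S x -> in_S (k *: x).
Proof. by move=> hx i hi; rewrite !mxE hx // mulr0. Qed.
Lemma dotS_scale {R : realType} {d : nat} (x : 'rV[R]_d) (L : R) (v : 'rV[R]_d) : in_S x -> dotv x (scalev L v) = dotv x v.
Proof.
move=> hx; rewrite (dotS_v x v hx) scalev_dec dotvDr dotvZr dotS_perp // mulr0 addr0 //.
Qed.
Lemma norm2_scale {R : realType} {d : nat} (L : R) (v : 'rV[R]_d) :
  norm2 (scalev L v) = norm2 (scalev 0 v) + L ^+ 2 * norm2 (vperp v).
Proof.
rewrite {1}/norm2 (scalev_dec L v) !(dotvDl, dotvDr, dotvZl, dotvZr) dot0perp (dotvC (vperp v)) dot0perp.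
rewrite expr2 /norm2; ring.
Qed.

Lemma pd_dot {R : realType} {d : nat} (P V W : 'rV[R]_d) (C L : R) :
  in_S P -> 0 < norm2 (scalev 0 V) ->
  let A := norm2 (scalev 0 V) in let B := norm2 (vperp V) in
  let E := dotv (vperp W) (vperp V) in let F := dotv (scalev 0 W) (scalev 0 V) in
  let q := P - (C / A) *: scalev 0 V in
  dotv (scalev L W) ((C / norm2 (scalev L V)) *: scalev L V + q) =
  dotv P W + C * L ^+ 2 * (E * A - F * B) / (A * (A + L ^+ 2 * B)).
Proof.
move=> hP hA A B E F q.
have hq : in_S q by apply: inS_B => //; apply: inS_Z; apply: inS_scale0.
rewrite dotvDr dotvZr (dotvC _ q) (dotS_scale q L W hq) norm2_scale -/A -/B.
rewrite (dotS_v q W hq) /q dotvBl dotvZl -(dotS_v P W hP).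
rewrite (scalev_dec L W) (scalev_dec L V) !(dotvDl, dotvDr, dotvZl, dotvZr) dot0perp (dotvC (vperp W)) dot0perp.
rewrite -/E (dotvC (scalev 0 V)) -/F.
have hB : 0 <= B by apply: norm2_ge0.
have hN : A + L ^+ 2 * B != 0.
  by apply: lt0r_neq0; apply: ltr_wpDr => //; apply: mulr_ge0 => //; apply: sqr_ge0.
have hA0 : A != 0 by apply: lt0r_neq0.
field; by rewrite hN hA0.
Qed.


Lemma sgn_atE {R : realType} {n : nat} (s : {ffun 'I_n.+2 -> bool}) k :
  (k < n.+2)%N -> sgn_at R s k = sgnb R (s (inord k)).
Proof.
move=> hk; rewrite /sgn_at insubT /=; congr (sgnb _ (s _)); apply: val_inj.
by rewrite /= inordK.
Qed.

Lemma sgn_pm {R : realType} {d : nat} (s : {ffun 'I_d -> bool}) k :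
  sgn_at R s k = 1 \/ sgn_at R s k = -1.
Proof. by rewrite /sgn_at; case: insub => [i|]; [case: (s i); [left|right]|left]. Qed.

Lemma gvE {R : realType} {d : nat} eps gam (s : {ffun 'I_d -> bool}) (i : 'I_d) :
  gvertex (R:=R) eps gam s 0 i = (vpair eps gam (sgn_at R s) i).1.
Proof. by rewrite mxE. Qed.

Lemma vpairS1 {R : realType} (eps gam : R) s m :
  (vpair eps gam s m.+1).1 = (vpair eps gam s m).2.
Proof. by rewrite /=; case: vpair. Qed.

Lemma vpairS2 {R : realType} (eps gam : R) s m :
  (vpair eps gam s m.+1).2 = s m.+2 * (1 - eps + eps * gam -
     eps * ((vpair eps gam s m).2 - gam * (vpair eps gam s m).1)).
Proof. by rewrite /=; case: vpair. Qed.

Lemma dot_S2 {R : realType} {n : nat} (x y : 'rV[R]_n.+2) : in_S x ->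
  dotv y x = y 0 (inord n) * x 0 (inord n) + y 0 ord_max * x 0 ord_max.
Proof.
move=> hx; rewrite /dotv big_ord_recr /= big_ord_recr /= big1 ?add0r.
  congr (_ * _ + _); congr (_ _ _); apply: val_inj; by rewrite /= inordK.
move=> i _; rewrite hx ?mulr0 //=.
by rewrite subn2 /=.
Qed.

Lemma p_le2 {R : realType} {n : nat} (eps gam : R) (P : 'rV[R]_n.+2) :
  0 < 4 * gam -> 4 * gam < eps -> eps < 1 / 2 -> in_S P ->
  in_dual_gol eps gam P -> P 0 (inord n) <= 2.
Proof.
move=> g0 ge e2 hS hdual.
pose tau := [ffun i : 'I_n.+2 => if i == ord_max then (0 <= P 0 ord_max)
                                  else ~~ odd (n - i)].
have := hdual tau; rewrite (dot_S2 _ _ hS) !gvE.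
set s := sgn_at R tau.
have hs : forall k, s k = 1 \/ s k = -1 by move=> k; apply: sgn_pm.
have sk : forall k, (k <= n)%N -> s k = sgnb R (~~ odd (n - k)).
  move=> k hk; rewrite /s sgn_atE; last by lia.
  rewrite ffunE; case: ifP => [/eqP/(congr1 val)|_]; last by rewrite inordK //; lia.
  by rewrite /= inordK //; lia.
have sn1 : s n.+1 = sgnb R (0 <= P 0 ord_max).
  rewrite /s sgn_atE // ffunE; case: ifP => // /eqP []; apply: val_inj.
  by rewrite /= inordK.
have hinv := vpair_inv _ _ _ _ g0 ge e2 hs.
have x1 : 0 <= (vpair eps gam s n.+1).1 * P 0 ord_max.
  have [_ _ h _ _] := hinv n.+1; move: h; rewrite sn1 /sgnb.
  case: ifP => hp h; first by apply: mulr_ge0 => //; nra.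
  rewrite mulrN1 oppr_gt0 in h; apply: mulr_le0 => //; [lra|].
  by move: hp => /negbT; rewrite -ltNge => /ltW.
have x0 : 1 / 2 <= (vpair eps gam s (inord n : 'I_n.+2)).1.
  rewrite inordK //.
  case: n P hS hdual tau s hs sk sn1 hinv x1 => [|[|m]] P hS hdual tau s hs sk sn1 hinv x1.
  - rewrite /= sk //=; lra.
  - rewrite vpairS1 /= !sk //=; lra.
  - rewrite vpairS1 vpairS2 (sk m.+2) // subnn /=.
    have [_ _ ha hb _] := hinv m.
    rewrite sk in ha; last by lia.
    rewrite (_ : (m.+2 - m = 2)%N) in ha; last by lia.
    rewrite sk in hb; last by lia.
    rewrite (_ : (m.+2 - m.+1 = 1)%N) in hb; last by lia.
    move: ha hb; rewrite /sgnb /= !mulr1 mulrN1 oppr_gt0 => ha hb.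
    have e0 : 0 < eps by lra.
    have h1 : eps * (vpair eps gam s m).2 < 0 by nra.
    have h2 : 0 < eps * gam * (vpair eps gam s m).1 by apply: mulr_gt0 => //; nra.
    nra.
move=> hle.
have e0 : 0 < eps by lra.
nra.
Qed.

Lemma coordE {R : realType} {n : nat} (x : 'rV[R]_n.+2) :
  Defs.coord x (n.+2 - 2) = x 0 (inord n).
Proof.
rewrite subn2 /= /Defs.coord insubT //= => h; congr (x 0 _); apply: val_inj.
by rewrite /= inordK.
Qed.

Lemma v0_i0 {R : realType} {n : nat} (v : 'rV[R]_n.+2) :
  scalev 0 v 0 (inord n) = v 0 (inord n).
Proof. by rewrite mxE inordK // subn2 /= ltnn. Qed.

Lemma l2p_i {n : nat} (s : {ffun 'I_n.+2 -> bool}) :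
  last_two_pos s -> s (inord n) /\ s ord_max.
Proof.
move=> /forallP h; split.
  by have := h (inord n); rewrite inordK // subn2 leqnn.
by have := h ord_max; rewrite subn2 /= leqnSn.
Qed.

Lemma a_pos {R : realType} {n : nat} (eps gam : R) (s : {ffun 'I_n.+2 -> bool}) :
  0 < 4 * gam -> 4 * gam < eps -> eps < 1 / 2 -> last_two_pos s ->
  0 < gvertex eps gam s 0 (inord n).
Proof.
move=> g0 ge e2 /l2p_i [h0 _].
have hs : forall k, sgn_at R s k = 1 \/ sgn_at R s k = -1 by move=> k; apply: sgn_pm.
have [_ _ h _ _] := vpair_inv _ _ _ _ g0 ge e2 hs n.
by rewrite gvE inordK // ; move: h; rewrite sgn_atE // h0 /sgnb mulr1.
Qed.

Lemma A_pos {R : realType} {n : nat} (eps gam : R) (s : {ffun 'I_n.+2 -> bool}) :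
  0 < 4 * gam -> 4 * gam < eps -> eps < 1 / 2 -> last_two_pos s ->
  0 < norm2 (scalev 0 (gvertex eps gam s)).
Proof.
move=> g0 ge e2 hs; have ha := a_pos _ _ _ g0 ge e2 hs.
rewrite /norm2 (dot_S2 _ _ (inS_scale0 _)) v0_i0.
have := sqr_ge0 (scalev 0 (gvertex eps gam s) 0 ord_max); rewrite expr2.
nra.
Qed.

Lemma k_nonpos {R : realType} {n : nat} (eps gam : R)
    (p : {ffun 'I_n.+2 -> bool} -> 'rV[R]_n.+2) (s : {ffun 'I_n.+2 -> bool}) :
  0 < 4 * gam -> 4 * gam < eps -> eps < 1 / 2 -> last_two_pos s ->
  in_S (p s) -> in_dual_gol eps gam (p s) ->
  Cq eps gam p s / norm2 (scalev 0 (gvertex eps gam s)) <= 0.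
Proof.
move=> g0 ge e2 hs hS hD.
have ha := a_pos _ _ _ g0 ge e2 hs.
have hA := A_pos _ _ _ g0 ge e2 hs.
have hp := p_le2 _ _ _ g0 ge e2 hS hD.
rewrite /Cq !coordE v0_i0.
set A := norm2 _ in hA *; set a := gvertex _ _ _ _ _ in ha *.
have -> : (p s 0 (inord n) - 2) * A / a / A = (p s 0 (inord n) - 2) / a.
  by field; rewrite !lt0r_neq0.
by apply: mulr_le0_ge0; [lra| rewrite invr_ge0 ltW].
Qed.

Lemma q_part {R : realType} {n : nat} (eps gam : R)
    (p : {ffun 'I_n.+2 -> bool} -> 'rV[R]_n.+2) :
  0 < 4 * gam -> 4 * gam < eps -> eps < 1 / 2 ->
  (forall sigma : {ffun 'I_n.+2 -> bool}, last_two_pos sigma ->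
     [/\ in_S (p sigma), in_dual_gol eps gam (p sigma),
         dotv (p sigma) (gvertex eps gam sigma) = 1 &
         forall tau, tau != sigma ->
           dotv (p sigma) (gvertex eps gam tau) < 1]) ->
  forall sigma tau : {ffun 'I_n.+2 -> bool},
     last_two_pos sigma -> last_two_pos tau ->
     qpt eps gam p sigma = qpt eps gam p tau -> sigma = tau.
Proof.
move=> g0 ge e2 H s t hs ht hq.
apply/eqP; apply: contraT => hne.
have [hSs hDs h1s hlts] := H s hs.
have [hSt hDt h1t hltt] := H t ht.
have ks := k_nonpos _ _ _ _ g0 ge e2 hs hSs hDs.
have kt := k_nonpos _ _ _ _ g0 ge e2 ht hSt hDt.
move: hq ks kt; rewrite /qpt.
set Vs := scalev 0 (gvertex eps gam s); set Vt := scalev 0 (gvertex eps gam t).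
set a := Cq _ _ _ s / _; set b := Cq _ _ _ t / _ => hq ks kt.
have hD : p s - p t = a *: Vs - b *: Vt.
  have -> : p s = p t - b *: Vt + a *: Vs by rewrite -hq subrK.
  by rewrite [_ - p t]addrC !addrA addNr add0r addrC.
have g1 : dotv (p t) Vs < 1 by rewrite -dotS_v //; apply: hltt.
have g2 : dotv (p s) Vt < 1 by rewrite -dotS_v //; apply: hlts; rewrite eq_sym.
have e1 : dotv (p s) Vs = 1 by rewrite -dotS_v.
have e2' : dotv (p t) Vt = 1 by rewrite -dotS_v.
have hn := norm2_ge0 (p s - p t).
rewrite /norm2 {2}hD dotvBr !dotvZr !dotvBl e1 e2' in hn.
have ha : a = 0.
  apply/eqP; rewrite eq_le ks /=.
  nra.
have hb : b = 0 by nra.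
move: hD; rewrite ha hb !scale0r subrr => /eqP; rewrite subr_eq0 => /eqP hst.
by move: g1; rewrite -hst e1 ltxx.
Qed.

Lemma pd_form {R : realType} {n : nat} (eps gam : R)
    (p : {ffun 'I_n.+2 -> bool} -> 'rV[R]_n.+2) (s t : {ffun 'I_n.+2 -> bool}) (L : R) :
  in_S (p s) -> 0 < norm2 (scalev 0 (gvertex eps gam s)) ->
  dotv (scalev L (gvertex eps gam t)) (pdelta eps gam p L s) =
  dotv (p s) (gvertex eps gam t) + Cq eps gam p s * L ^+ 2 *
   (dotv (vperp (gvertex eps gam t)) (vperp (gvertex eps gam s)) *
      norm2 (scalev 0 (gvertex eps gam s)) -
    dotv (scalev 0 (gvertex eps gam t)) (scalev 0 (gvertex eps gam s)) *
      norm2 (vperp (gvertex eps gam s))) /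
   (norm2 (scalev 0 (gvertex eps gam s)) *
    (norm2 (scalev 0 (gvertex eps gam s)) + L ^+ 2 * norm2 (vperp (gvertex eps gam s)))).
Proof.
move=> hS hA; exact: (pd_dot (p s) (gvertex eps gam s) (gvertex eps gam t) (Cq eps gam p s) L hS hA).
Qed.
Lemma term_bound {R : realType} (C Y A B L : R) : 0 < A -> 0 <= B ->
  C * L ^+ 2 * Y / (A * (A + L ^+ 2 * B)) <= L ^+ 2 * (`|C * Y| / (A * A)).
Proof.
move=> hA hB.
have hL : 0 <= L ^+ 2 by apply: sqr_ge0.
have hN : A <= A + L ^+ 2 * B by rewrite lerDl mulr_ge0.
have hN0 : 0 < A + L ^+ 2 * B by lra.
rewrite (_ : C * L ^+ 2 * Y = L ^+ 2 * (C * Y)); last by ring.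
rewrite -mulrA ler_wpM2l //.
apply: (le_trans (y := `|C * Y| / (A * (A + L ^+ 2 * B)))).
  by rewrite ler_pM2r ?invr_gt0 ?mulr_gt0 // real_ler_norm // num_real.
rewrite ler_wpM2l // lef_pV2 ?posrE ?mulr_gt0 //.
by rewrite ler_pM2l.
Qed.

Lemma pd_part {R : realType} {n : nat} (eps gam : R)
    (p : {ffun 'I_n.+2 -> bool} -> 'rV[R]_n.+2) :
  0 < 4 * gam -> 4 * gam < eps -> eps < 1 / 2 ->
  (forall sigma : {ffun 'I_n.+2 -> bool}, last_two_pos sigma ->
     [/\ in_S (p sigma), in_dual_gol eps gam (p sigma),
         dotv (p sigma) (gvertex eps gam sigma) = 1 &
         forall tau, tau != sigma ->
           dotv (p sigma) (gvertex eps gam tau) < 1]) ->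
  (exists2 delta0 : R, 0 < delta0 &
     forall delta : R, 0 < delta -> delta < delta0 ->
       forall sigma tau : {ffun 'I_n.+2 -> bool},
         last_two_pos sigma -> last_two_pos tau ->
         pdelta eps gam p delta sigma = pdelta eps gam p delta tau ->
         sigma = tau).
Proof.
move=> g0 ge e2 H.
pose A (s : {ffun 'I_n.+2 -> bool}) := norm2 (scalev 0 (gvertex eps gam s)).
pose B (s : {ffun 'I_n.+2 -> bool}) := norm2 (vperp (gvertex eps gam s)).
pose E (s t : {ffun 'I_n.+2 -> bool}) := dotv (vperp (gvertex eps gam t)) (vperp (gvertex eps gam s)).
pose F (s t : {ffun 'I_n.+2 -> bool}) := dotv (scalev 0 (gvertex eps gam t)) (scalev 0 (gvertex eps gam s)).
pose K (s t : {ffun 'I_n.+2 -> bool}) := `|Cq eps gam p s * (E s t * A s - F s t * B s)| / (A s * A s).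
pose g (s t : {ffun 'I_n.+2 -> bool}) := dotv (p s) (gvertex eps gam t).
pose h (s t : {ffun 'I_n.+2 -> bool}) := if [&& last_two_pos s, last_two_pos t & t != s]
              then (1 - g s t) / (K s t + 1) else 1.
have K0 : forall s t, 0 <= K s t.
  by move=> s t; rewrite /K divr_ge0 // mulr_ge0 // norm2_ge0.
have hpos : forall s t, 0 < h s t.
  move=> s t; rewrite /h; case: ifP => // /and3P [hs ht hne].
  have [_ _ _ hl] := H s hs; have hg := hl t hne.
  have := K0 s t => k0.
  by apply: divr_gt0; rewrite /g; lra.
pose S := \sum_(x : {ffun 'I_n.+2 -> bool} * {ffun 'I_n.+2 -> bool}) 1 / h x.1 x.2.
have S0 : 0 <= S by apply: sumr_ge0 => x _; rewrite divr_ge0 // ltW.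
exists (1 / (1 + S)); first by apply: divr_gt0; lra.
move=> del d0 dlt s t hs ht heq.
apply/eqP; apply: contraT => hne.
have hst : 1 / h s t <= S.
  rewrite /S (bigD1 (s, t)) //= lerDl; apply: sumr_ge0 => x _.
  by rewrite divr_ge0 // ltW.
have hsp := hpos s t.
have hh : 1 / h s t * h s t = 1 by rewrite mul1r mulVf // lt0r_neq0.
have dh : del < h s t.
  apply: (lt_le_trans dlt); rewrite ler_pdivrMr; last by lra.
  nra.
have d1 : del < 1.
  apply: (lt_le_trans dlt); rewrite ler_pdivrMr; last by lra.
  lra.
have [hSs hDs h1s hlts] := H s hs.
have [hSt hDt h1t hltt] := H t ht.
have hAs := A_pos _ _ _ g0 ge e2 hs.
have hAt := A_pos _ _ _ g0 ge e2 ht.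
have ht1 := pd_form _ _ p t t del hSt hAt.
rewrite h1t /norm2 (mulrC (dotv (vperp _) _)) subrr mulr0 mul0r addr0 in ht1.
have hs1 := pd_form _ _ p s t del hSs hAs.
rewrite heq ht1 in hs1.
have hb := term_bound (Cq eps gam p s) (E s t * A s - F s t * B s) (A s) (B s) del hAs (norm2_ge0 _).
have hgst : g s t < 1 by apply: hlts; rewrite eq_sym.
have hhe : h s t * (K s t + 1) = 1 - g s t.
  rewrite /h hs ht eq_sym hne /=; field.
  by apply: lt0r_neq0; have := K0 s t; lra.
have hdd : del ^+ 2 <= h s t.
  rewrite expr2; nra.
have := K0 s t => k0.
have : del ^+ 2 * K s t <= h s t * K s t by rewrite ler_wpM2r.
rewrite /g in hgst hhe.
move: hb; rewrite -/(A s) -/(K s t).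
move: hs1; rewrite -/(E s t) -/(F s t) -/(A s) -/(B s) -/(g s t).
set T := Cq _ _ _ _ * _ * _ / _.
move=> hs1 hb h2.
rewrite /g in hs1; nra.
Qed.

Theorem corollary3 (R : realType) (d : nat) (eps gam : R)
    (p : {ffun 'I_d -> bool} -> 'rV[R]_d) :
  (2 <= d)%N ->
  0 < 4 * gam -> 4 * gam < eps -> eps < 1 / 2 ->
  (forall sigma : {ffun 'I_d -> bool}, last_two_pos sigma ->
     [/\ in_S (p sigma), in_dual_gol eps gam (p sigma),
         dotv (p sigma) (gvertex eps gam sigma) = 1 &
         forall tau, tau != sigma ->
           dotv (p sigma) (gvertex eps gam tau) < 1]) ->
  (exists2 delta0 : R, 0 < delta0 &
     forall delta : R, 0 < delta -> delta < delta0 ->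
       forall sigma tau : {ffun 'I_d -> bool},
         last_two_pos sigma -> last_two_pos tau ->
         pdelta eps gam p delta sigma = pdelta eps gam p delta tau ->
         sigma = tau) /\
  (forall sigma tau : {ffun 'I_d -> bool},
     last_two_pos sigma -> last_two_pos tau ->
     qpt eps gam p sigma = qpt eps gam p tau -> sigma = tau).
Proof.
case: d p => [|[|n]] p // _ g0 ge e2 H; split.
  exact: pd_part g0 ge e2 H.
exact: q_part g0 ge e2 H.
Qed.
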